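(* Let $k\geq 2$ and let $G$ be a bipartite graph of order $n\geq 11k-4$ that does not contain $k\cdot P_3$ as a subgraph. Then $\rho(G)\leq \sqrt{(k-1)(n-k+1)}$, with equality if and only if $G=K_{k-1,n-k+1}$.
   Context: Graphs are finite and simple; $\rho(G)$ is the largest eigenvalue of the adjacency matrix of $G$. $P_3$ is the path on 3 vertices and $k\cdot P_3$ is the disjoint union of $k$ copies of $P_3$. $K_{a,b}$ is the complete bipartite graph with parts of sizes $a$ and $b$. *)

(* Defs.v *)
From HB Require Import structures.
From mathcomp Require Import all_boot all_order all_algebra.
From mathcomp.real_closed Require Import polyrcf.
Set Implicit Arguments. Unset Strict Implicit. Unset Printing Implicit Defensive.
Import Order.TTheory GRing.Theory Num.Theory.
Local Open Scope ring_scope.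

Definition simple_graph (T : finType) (e : rel T) : Prop :=
  symmetric e /\ irreflexive e.

Definition adj_mx (R : nzRingType) (T : finType) (e : rel T) : 'M[R]_#|T| :=
  \matrix_(i, j) (e (enum_val i) (enum_val j))%:R.

Definition spec_rad (R : rcfType) (T : finType) (e : rel T) : R :=
  \big[Num.max/0]_(x <- rootsR (char_poly (adj_mx R e))) x.

Definition bipartite (T : finType) (e : rel T) : Prop :=
  exists A : {set T}, forall x y, e x y -> (x \in A) != (y \in A).

(* G contains k.P3 as a (not necessarily induced) subgraph: an injective map
   from the vertices (i, j) (copy i, position j on the path) into T sending
   the path edges (i,0)-(i,1) and (i,1)-(i,2) to edges of G. *)
Definition contains_kP3 (T : finType) (e : rel T) (k : nat) : Prop :=
  exists f : 'I_k * 'I_3 -> T, injective f /\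
    forall i : 'I_k,
      e (f (i, 0%R)) (f (i, 1%R)) /\ e (f (i, 1%R)) (f (i, 2%:R)).

Definition is_complete_bipartite (T : finType) (e : rel T) (a b : nat) : Prop :=
  exists A : {set T}, #|A| = a /\ #|~: A| = b /\
    forall x y, e x y = ((x \in A) != (y \in A)).

(* Main.v *)
Require Import Defs.
From HB Require Import structures.
From mathcomp Require Import all_boot all_order all_algebra.
From mathcomp.real_closed Require Import polyrcf.
From mathcomp Require Import zify ring lra.
From Stdlib Require Import Classical.
Import Order.TTheory GRing.Theory Num.Theory.

(* Proof outline:
   - spectral part: for an eigenvector w of the adjacency matrix with eigenvalue lam of a
     bipartite graph, lam^2 <= m (number of edges), with equality forcing complete
     bipartite structure (Cauchy-Schwarz);
   - combinatorial part: a bipartite kP3-free graph on n >= 11k-4 vertices has at most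
     (k-1)(n-k+1) edges (induction on k). *)

Module F3.

Lemma arith_one k n p q : 2 <= k -> 11 * k - 4 <= n -> p * q = (k - 1) * (n - k + 1) ->
  p + q <= n -> p <= k - 1 -> p = k - 1 /\ q = n - k + 1.
Proof.
move=> k2 hn hpq hs hp.
have hq : q <= n - p by lia.
have h1 : p * q <= p * (n - p) by apply: leq_mul.
case: (ltnP p (k - 1)) => hp2.
  exfalso.
  have : p * (n - p) < (k - 1) * (n - k + 1).
    have e1 : (k - 1) * (n - k + 1) = p * (n - k + 1) + (k - 1 - p) * (n - k + 1) by nia.
    have e2 : p * (n - p) = p * (n - k + 1) + p * (k - 1 - p) by nia.
    have : p * (k - 1 - p) < (k - 1 - p) * (n - k + 1).
      rewrite mulnC ltn_mul2l; lia.
    lia.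
  lia.
have pe : p = k - 1 by lia.
split => //; rewrite pe in hpq.
apply/eqP; rewrite -(eqn_pmul2l (_ : 0 < k - 1)); last by lia.
by rewrite hpq.
Qed.

Lemma arith_final k n p q : 2 <= k -> 11 * k - 4 <= n -> p * q = (k - 1) * (n - k + 1) ->
  p + q <= n -> ~ (k <= p /\ 2 * k <= q) -> ~ (k <= q /\ 2 * k <= p) ->
  (p = k - 1 /\ q = n - k + 1) \/ (q = k - 1 /\ p = n - k + 1).
Proof.
move=> k2 hn hpq hs n1 n2.
case: (leqP p (k - 1)) => hp; first by left; apply: arith_one hn hpq hs hp.
case: (leqP q (k - 1)) => hq.
  right; apply: (@arith_one k n q p k2 hn _ _ hq); [by rewrite mulnC | by rewrite addnC].
exfalso.
have hp2 : p < 2 * k by case: (leqP (2 * k) p) => // h; exfalso; apply: n2; lia.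
have hq2 : q < 2 * k by case: (leqP (2 * k) q) => // h; exfalso; apply: n1; lia.
have : p * q <= (2 * k - 1) * (2 * k - 1) by apply: leq_mul; lia.
have : (2 * k - 1) * (2 * k - 1) < (k - 1) * (n - k + 1).
  have : (2 * k - 1) * (2 * k - 1) < (k - 1) * (10 * k - 3) by nia.
  move=> h; apply: (leq_trans h); apply: leq_mul => //; lia.
lia.
Qed.

End F3.
Import F3.

Set Implicit Arguments. Unset Strict Implicit. Unset Printing Implicit Defensive.

Module M_c1.

Lemma I3cases (j : 'I_3) : j = 0%R \/ j = 1%R \/ j = 2%:R%R.
Proof.
case: j => [[|[|[|m]]] H].
- by left; apply: val_inj.
- by right; left; apply: val_inj.
- by right; right; apply: val_inj.
- by [].
Qed.

Lemma I3sum (F : 'I_3 -> nat) : \sum_(j < 3) F j = F 0%R + F 1%R + F 2%:R%R.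
Proof.
rewrite !big_ord_recl big_ord0 addn0 addnA.
by congr (F _ + F _ + F _); apply: val_inj.
Qed.

Lemma I3_neq : (0%R : 'I_3) != 1%R /\ (1%R : 'I_3) != 2%:R%R /\ (0%R : 'I_3) != 2%:R%R.
Proof. by do !split. Qed.

Lemma maxpack (P : nat -> Prop) k : P 0 -> ~ P k -> exists t, t < k /\ P t /\ ~ P t.+1.
Proof.
move=> P0; elim: k => [|k IH] nPk; first by [].
case: (classic (P k)) => Pk; first by exists k.
by have [t [h1 h2]] := IH Pk; exists t; split => //; apply: ltnW.
Qed.

Section Pack.
Variable T : finType.
Variable e : rel T.

Definition packing t (f : 'I_t * 'I_3 -> T) :=
  injective f /\ forall i : 'I_t, e (f (i, 0%R)) (f (i, 1%R)) /\ e (f (i, 1%R)) (f (i, 2%:R%R)).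

Lemma packingP t : contains_kP3 e t <-> exists f, packing (t:=t) f.
Proof. by []. Qed.

Definition f0 (p : 'I_0 * 'I_3) : T :=
  match p.1 with @Ordinal _ m H => False_rect T (Bool.diff_false_true H) end.

Lemma pack0 : packing f0.
Proof. by split; [move=> [[]] | case]. Qed.

Definition ext t (f : 'I_t * 'I_3 -> T) (x y z : T) (p : 'I_t.+1 * 'I_3) : T :=
  match unlift ord_max p.1 with
  | Some i => f (i, p.2)
  | None => nth x [:: x; y; z] p.2
  end.

Lemma ext_pack t (f : 'I_t * 'I_3 -> T) x y z :
  packing f -> x != y -> y != z -> x != z ->
  (forall p, [/\ f p != x, f p != y & f p != z]) ->
  e x y -> e y z -> packing (ext f x y z).
Proof.
move=> [finj fe] xy yz xz fn exy eyz; split.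
  move=> [p1 p2] [q1 q2]; rewrite /ext /=.
  case: (unliftP ord_max p1) => [i|] Ep ; case: (unliftP ord_max q1) => [j|] Eq /=.
  - by rewrite Ep Eq => /finj [-> ->].
  - move=> E; have [a b c] := fn (i, p2); move: a b c; rewrite E.
    by have := I3cases q2 => [[|[|]]] -> /=; rewrite eqxx.
  - move=> E; have [a b c] := fn (j, q2); move: a b c; rewrite -E.
    by have := I3cases p2 => [[|[|]]] -> /=; rewrite eqxx.
  - have := I3cases p2 => [[|[|]]] ->; have := I3cases q2 => [[|[|]]] -> //= E;
    by move: xy yz xz; rewrite ?E ?eqxx ?Ep ?Eq.
move=> i; rewrite /ext /=; case: (unliftP ord_max i) => [j|] _ /=; first exact: fe.
by split.
Qed.

Lemma ext_contains t (f : 'I_t * 'I_3 -> T) x y z :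
  packing f -> x != y -> y != z -> x != z ->
  (forall p, [/\ f p != x, f p != y & f p != z]) ->
  e x y -> e y z -> contains_kP3 e t.+1.
Proof. by move=> *; exists (ext f x y z); apply: ext_pack. Qed.

End Pack.

End M_c1.
Import M_c1.

Module M_c2.

Definition dg (T : finType) (e : rel T) (y : T) : nat := \sum_x (e x y : nat).
Definition Dsum (T : finType) (e : rel T) : nat := \sum_y dg e y.

Lemma sumb_card (T : finType) (A : {set T}) (P : pred T) :
  \sum_(x in A) (P x : nat) = #|[set x in A | P x]|.
Proof.
rewrite -sum1dep_card big_mkcondr /=; apply: eq_bigr => x _; by case: (P x).
Qed.

Lemma sumb_card_all (T : finType) (P : pred T) :
  \sum_x (P x : nat) = #|[set x | P x]|.
Proof.
rewrite -sum1dep_card [RHS]big_mkcond /=; apply: eq_bigr => x _; by case: (P x).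
Qed.

Section Deg.
Variable T : finType.
Variable e : rel T.
Hypothesis esym : symmetric e.
Hypothesis eirr : irreflexive e.

Lemma deg_le1 t (f : 'I_t * 'I_3 -> T) : packing e f -> ~ contains_kP3 e t.+1 ->
  forall A : {set T}, (forall p, f p \notin A) ->
  forall y, y \in A -> \sum_(x in A) (e x y : nat) <= 1.
Proof.
move=> pf np A hA y yA; rewrite sumb_card leqNgt; apply/negP => /card_gt1P [x1 [x2 []]].
rewrite !inE => /andP [x1A ex1] /andP [x2A ex2] x12.
apply: np; apply: (@ext_contains _ _ _ f x1 y x2) => //.
- by apply: contraTneq ex1 => ->; rewrite eirr.
- by apply: contraTneq ex2 => ->; rewrite eirr.
- by move=> p; have hp := hA p; split; apply: (contraNneq _ hp) => ->.
- by rewrite esym.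
Qed.

End Deg.

End M_c2.
Import M_c2.

Module M_s1.
Local Open Scope ring_scope.
Section Spec.
Variable R : rcfType.
Variable T : finType.
Variable e : rel T.

Lemma mx_entry (v : 'rV[R]_#|T|) j :
  (v *m adj_mx R e) 0 j = \sum_x v 0 (enum_rank x) * (e x (enum_val j))%:R.
Proof.
rewrite mxE (reindex (@enum_rank T)) /=; last first.
  by exists enum_val => x _; rewrite ?enum_rankK ?enum_valK.
by apply: eq_bigr => x _; rewrite /adj_mx mxE enum_rankK.
Qed.

Lemma bigmax_cases (s : seq R) : (\big[Num.max/0]_(x <- s) x = 0) \/ (\big[Num.max/0]_(x <- s) x \in s).
Proof.
elim: s => [|a s IH]; first by left; rewrite big_nil.
rewrite big_cons; case: IH => [->|H].
  by case: (leP a 0) => _; [left|right; rewrite inE eqxx].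
by case: (leP a (\big[Num.max/0]_(x <- s) x)) => _; right; rewrite inE ?eqxx ?H ?orbT.
Qed.

Lemma bigmax_ge (s : seq R) x : x \in s -> x <= \big[Num.max/0]_(y <- s) y.
Proof.
elim: s => [|a s IH] //; rewrite inE big_cons => /orP[/eqP->|/IH h].
  by rewrite le_max lexx.
by rewrite le_max h orbT.
Qed.

Lemma in_rootsR (p : {poly R}) x : p != 0 -> (x \in rootsR p) = root p x.
Proof. by move=> p0; rewrite -(roots_on_rootsR p0 x). Qed.

End Spec.

Section CS.
Variable R : rcfType.
Variable T : finType.

Lemma cauchy_schwarz (b : T -> bool) (c : T -> R) :
  (\sum_x (b x)%:R * c x) ^+ 2 <= (\sum_x (b x : nat))%:R * \sum_x (b x)%:R * c x ^+ 2.
Proof.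
set B := (\sum_x (b x : nat))%:R.
set As := \sum_x (b x)%:R * c x ^+ 2.
set Ds := \sum_x (b x)%:R * c x.
have HB : B = \sum_x ((b x)%:R : R) by rewrite /B natr_sum.
have H0 : 0 <= \sum_x \sum_z ((b x)%:R * (b z)%:R * (c x - c z) ^+ 2 : R).
  apply: sumr_ge0 => x _; apply: sumr_ge0 => z _.
  by rewrite mulr_ge0 ?sqr_ge0 // mulr_ge0 ?ler0n.
have E : \sum_x \sum_z ((b x)%:R * (b z)%:R * (c x - c z) ^+ 2 : R) =
         As * B + B * As - 2 * (Ds * Ds).
  transitivity (\sum_x (((b x)%:R * c x ^+ 2) * B + (b x)%:R * As - 2 * (((b x)%:R * c x) * Ds))).
    apply: eq_bigr => x _.
    rewrite HB /As /Ds !mulr_sumr.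
    rewrite -big_split -sumrB /=.
    by apply: eq_bigr => z _; ring.
  rewrite sumrB big_split /= -!mulr_suml -mulr_sumr -!mulr_suml.
  by rewrite HB.
rewrite E in H0.
rewrite expr2 mulrC; lra.
Qed.

Variable e : rel T.
Variable w : T -> R.
Variable lam : R.
Hypothesis eig : forall y, \sum_x w x * (e x y)%:R = lam * w y.

Definition a2 (Z : {set T}) := \sum_(x in Z) w x ^+ 2.
Definition N2 y := \sum_x (e x y)%:R * w x ^+ 2.

Lemma a2_ge0 Z : 0 <= a2 Z.
Proof. by apply: sumr_ge0 => x _; rewrite sqr_ge0. Qed.

Lemma N2_ge0 y : 0 <= N2 y.
Proof. by apply: sumr_ge0 => x _; rewrite mulr_ge0 ?sqr_ge0 ?ler0n. Qed.

Section Side.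
Variable Z : {set T}.
Hypothesis HZ : forall x y, y \in ~: Z -> e x y -> x \in Z.

Lemma vert_ineq y : y \in ~: Z ->
  (lam * w y) ^+ 2 <= (dg e y)%:R * N2 y /\ N2 y <= a2 Z.
Proof.
move=> yZ; split.
  rewrite -eig (eq_bigr (fun x => (e x y)%:R * w x)); last by move=> x _; rewrite mulrC.
  exact: cauchy_schwarz.
rewrite /N2 /a2 (bigID (fun x => x \in Z)) /= [X in _ + X]big1 ?addr0; last first.
  move=> x xZ; case: (boolP (e x y)) => exy; last by rewrite mul0r.
  by rewrite (HZ yZ exy) in xZ.
by apply: ler_sum => x _; case: (e x y); rewrite ?mul1r ?mul0r ?sqr_ge0.
Qed.

Lemma side_ineq :
  lam ^+ 2 * a2 (~: Z) <= (\sum_(y in ~: Z) dg e y)%:R * a2 Z.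
Proof.
rewrite /a2 mulr_sumr natr_sum mulr_suml; apply: ler_sum => y yZ.
have [h1 h2] := vert_ineq yZ.
rewrite -exprMn; apply: (le_trans h1).
by rewrite ler_wpM2l ?ler0n //; exact: h2.
Qed.

Lemma side_eq : lam != 0 -> 0 < a2 Z ->
  lam ^+ 2 * a2 (~: Z) = (\sum_(y in ~: Z) dg e y)%:R * a2 Z ->
  forall y, y \in ~: Z ->
  ((w y != 0) = (dg e y != 0)%N) /\
  (w y != 0 -> forall x, x \in Z -> w x != 0 -> e x y).
Proof.
move=> lam0 a0 Heq.
have Hz : forall y, y \in ~: Z -> (dg e y)%:R * a2 Z - (lam * w y) ^+ 2 = 0.
  apply: psumr_eq0P.
    move=> y yZ; have [h1 h2] := vert_ineq yZ; rewrite subr_ge0.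
    by apply: (le_trans h1); rewrite ler_wpM2l ?ler0n.
  rewrite sumrB -mulr_suml -natr_sum -Heq /a2 mulr_sumr.
  by apply/eqP; rewrite subr_eq0; apply/eqP; apply: eq_bigr => y _; rewrite exprMn.
move=> y yZ; have := Hz y yZ; move/eqP; rewrite subr_eq0 => /eqP Hy.
split.
  have E1 : (w y == 0) = ((lam * w y)^+2 == 0) by rewrite sqrf_eq0 mulf_eq0 (negPf lam0).
  have E2 : ((dg e y) == 0)%N = ((dg e y)%:R * a2 Z == 0).
    by rewrite mulf_eq0 pnatr_eq0 (negPf (lt0r_neq0 a0)) orbF.
  by rewrite E1 E2 Hy.
move=> wy0 x xZ wx0.
have dg0 : (dg e y != 0)%N.
  apply: contra wy0 => /eqP d0; move: Hy; rewrite d0 mul0r => /eqP.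
  by rewrite eq_sym sqrf_eq0 mulf_eq0 (negPf lam0).
have [h1 h2] := vert_ineq yZ.
have HN : N2 y = a2 Z.
  apply/eqP; rewrite eq_le h2 /=.
  rewrite -(ler_pM2l (_ : 0 < (dg e y)%:R)); last by rewrite ltr0n lt0n.
  by rewrite Hy.
apply/negP => nexy.
move: HN; rewrite /N2 /a2 (bigID (fun x => x \in Z)) /= [X in _ + X]big1 ?addr0; last first.
  move=> x' xZ'; case: (boolP (e x' y)) => exy; last by rewrite mul0r.
  by rewrite (HZ yZ exy) in xZ'.
move/eqP; rewrite eq_sym -subr_eq0 -sumrB => /eqP H.
have Hnn : forall z, z \in Z -> 0 <= w z ^+ 2 - (e z y)%:R * w z ^+ 2.
  by move=> z _; case: (e z y); rewrite ?mul1r ?mul0r ?subrr ?subr0 ?sqr_ge0.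
have := psumr_eq0P Hnn H xZ.
rewrite (negbTE (introN idP nexy)) mul0r subr0 => /eqP; rewrite sqrf_eq0.
by rewrite (negPf wx0).
Qed.

End Side.


Variable X : {set T}.
Hypothesis esym : symmetric e.
Hypothesis bip : forall x y, e x y -> (x \in X) != (y \in X).
Hypothesis wnz : exists x, w x != 0.

Lemma dg_sides : \sum_(y in X) dg e y = \sum_(y in ~: X) dg e y.
Proof.
rewrite /dg.
transitivity (\sum_(y in X) \sum_(x in ~: X) (e x y : nat)).
  apply: eq_bigr => y yX; rewrite (bigID (fun x => x \in ~: X)) /= addnC big1 //.
  move=> x; rewrite in_setC negbK => xX; case: (boolP (e x y)) => // /bip.
  by rewrite xX yX.
rewrite exchange_big /=; apply: eq_bigr => y yX.
rewrite [RHS](bigID (fun x => x \in X)) /= [s in (_ + s)%N]big1 ?addn0.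
  by apply: eq_bigr => x _; rewrite esym.
move=> x xX; case: (boolP (e x y)) => // /bip.
by move: yX; rewrite in_setC => /negPf ->; rewrite (negPf xX).
Qed.

Let m := \sum_(y in ~: X) dg e y.

Lemma HZ1 : forall x y, y \in ~: X -> e x y -> x \in X.
Proof.
move=> x y; rewrite in_setC => yX /bip; by rewrite (negPf yX); case: (x \in X).
Qed.
Lemma HZ2 : forall x y, y \in ~: ~: X -> e x y -> x \in ~: X.
Proof.
move=> x y; rewrite setCK in_setC => yX /bip; by rewrite yX; case: (x \in X).
Qed.

Lemma tot_pos : 0 < a2 X + a2 (~: X).
Proof.
have -> : a2 X + a2 (~: X) = \sum_x w x ^+ 2.
  by rewrite /a2 [RHS](bigID (fun x => x \in X)) /=; congr (_ + _); apply: eq_bigl => x; rewrite in_setC.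
case: wnz => x0 wx0.
rewrite (bigD1 x0) //=.
have hp : 0 < w x0 ^+ 2 by rewrite lt_def sqrf_eq0 wx0 sqr_ge0.
have hs : 0 <= \sum_(i | i != x0) w i ^+ 2 by apply: sumr_ge0 => x _; rewrite sqr_ge0.
lra.
Qed.

Lemma H1 : lam ^+ 2 * a2 (~: X) <= m%:R * a2 X.
Proof. exact: side_ineq HZ1. Qed.
Lemma H2 : lam ^+ 2 * a2 X <= m%:R * a2 (~: X).
Proof. by have := side_ineq HZ2; rewrite setCK dg_sides. Qed.

Lemma spec_le : lam ^+ 2 <= m%:R.
Proof.
rewrite -(ler_pM2r tot_pos) !mulrDr.
by have := H1; have := H2; lra.
Qed.

Definition PP := [set x in X | w x != 0].
Definition QQ := [set x in ~: X | w x != 0].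

Lemma spec_eq : lam != 0 -> lam ^+ 2 = m%:R ->
  forall x y, e x y = ((x \in PP) && (y \in QQ)) || ((x \in QQ) && (y \in PP)).
Proof.
move=> lam0 Heq.
have h1 := H1; have h2 := H2; have tp := tot_pos.
have l2 : 0 < lam ^+ 2 by rewrite lt_def sqrf_eq0 lam0 sqr_ge0.
have Eab : a2 X = a2 (~: X).
  rewrite -Heq in h1 h2.
  apply/eqP; rewrite eq_le; apply/andP; split.
    by rewrite -(ler_pM2l l2).
  by rewrite -(ler_pM2l l2).
have aX : 0 < a2 X by move: tp; rewrite -Eab; lra.
have aCX : 0 < a2 (~: X) by rewrite -Eab.
have E1 : lam ^+ 2 * a2 (~: X) = (\sum_(y in ~: X) dg e y)%:R * a2 X.
  by rewrite -/m -Heq Eab.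
have E2 : lam ^+ 2 * a2 (~: ~: X) = (\sum_(y in ~: ~: X) dg e y)%:R * a2 (~: X).
  by rewrite setCK dg_sides -/m -Heq Eab.
have S1 := side_eq HZ1 lam0 aX E1.
have S2 := side_eq HZ2 lam0 aCX E2.
have dgpos : forall x y, e x y -> (dg e y != 0)%N.
  move=> x y exy; rewrite /dg -lt0n (bigD1 x) //= exy //.
move=> x y; rewrite !inE.
case: (boolP (x \in X)) => xX; case: (boolP (y \in X)) => yX /=.
- rewrite andbF; apply: negbTE; apply/negP => /bip; by rewrite xX yX.
- rewrite orbF; have yCX : y \in ~: X by rewrite in_setC yX.
  case: (boolP (e x y)) => exy.
    have [A1 _] := S1 y yCX; have wy : w y != 0 by rewrite A1 (dgpos _ _ exy).
    have xCCX : x \in ~: ~: X by rewrite setCK.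
    have [A2 _] := S2 x xCCX; have wx : w x != 0 by rewrite A2 (dgpos y x) // esym.
    by rewrite wx wy.
  case: (boolP (w x != 0)) => wx //=; symmetry; apply: negbTE; apply: contra exy => wy.
  by have [_ B1] := S1 y yCX; apply: B1.
- have xCX : x \in ~: X by rewrite in_setC xX.
  have yCCX : y \in ~: ~: X by rewrite setCK.
  case: (boolP (e x y)) => exy.
    have [A2 _] := S2 y yCCX; have wy : w y != 0 by rewrite A2 (dgpos _ _ exy).
    have [A1 _] := S1 x xCX; have wx : w x != 0 by rewrite A1 (dgpos y x) // esym.
    by rewrite wx wy.
  case: (boolP (w x != 0)) => wx //=; symmetry; apply: negbTE; apply: contra exy => wy.
  by have [_ B2] := S2 y yCCX; apply: B2.
- rewrite andbF; apply: negbTE; apply/negP => /bip; by rewrite (negPf xX) (negPf yX).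
Qed.

End CS.

End M_s1.
Import M_s1.

Module M_c3.

Section Comb.
Variable T : finType.
Variable e : rel T.
Variables W X : {set T}.
Hypothesis esym : symmetric e.
Hypothesis eirr : irreflexive e.
Hypothesis eW : forall x y, e x y -> x \in W.
Hypothesis bip : forall x y, e x y -> (x \in X) != (y \in X).

Lemma eW2 x y : e x y -> y \in W.
Proof. by rewrite esym => /eW. Qed.

Lemma dg0 y : y \notin W -> dg e y = 0.
Proof.
move=> yW; apply/eqP; rewrite sum_nat_eq0; apply/forallP => x; apply/implyP => _.
by case: (boolP (e x y)) => // /eW2; rewrite (negPf yW).
Qed.

Lemma dg_sidesC : \sum_(y in X) dg e y = \sum_(y in ~: X) dg e y.
Proof.
rewrite /dg.
transitivity (\sum_(y in X) \sum_(x in ~: X) (e x y : nat)).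
  apply: eq_bigr => y yX; rewrite (bigID (fun x => x \in ~: X)) /= addnC big1 //.
  move=> x; rewrite in_setC negbK => xX; case: (boolP (e x y)) => // /bip.
  by rewrite xX yX.
rewrite exchange_big /=; apply: eq_bigr => y yX.
rewrite [RHS](bigID (fun x => x \in X)) /= [s in (_ + s)%N]big1 ?addn0.
  by apply: eq_bigr => x _; rewrite esym.
move=> x xX; case: (boolP (e x y)) => // /bip.
by move: yX; rewrite in_setC => /negPf ->; rewrite (negPf xX).
Qed.

Lemma Dsides : Dsum e = 2 * \sum_(y in X) dg e y.
Proof.
rewrite /Dsum (bigID (fun y => y \in X)) /= mul2n -addnn; congr (_ + _).
by rewrite dg_sidesC; apply: eq_bigl => y; rewrite in_setC.
Qed.

Lemma sum_dg_le c : (forall y, y \in X -> y \in W -> dg e y <= c) ->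
  \sum_(y in X) dg e y <= #|W :&: X| * c.
Proof.
move=> h.
apply: (@leq_trans (\sum_(y in X) ((y \in W) * c))).
  apply: leq_sum => y yX; case: (boolP (y \in W)) => yW.
    by rewrite mul1n h.
  by rewrite dg0.
rewrite -big_distrl /= sumb_card; apply: leq_mul => //.
by rewrite leq_eqVlt; apply/orP; left; apply/eqP; apply: eq_card => y; rewrite !inE andbC.
Qed.

Lemma dg_side y : y \in X -> dg e y <= #|W :\: X|.
Proof.
move=> yX; rewrite /dg.
apply: (@leq_trans (\sum_x ((x \in W :\: X) : nat))).
  apply: leq_sum => x _; case: (boolP (e x y)) => // exy.
  rewrite !inE (eW exy) andbT; have := bip exy; rewrite yX; by case: (x \in X).
rewrite sumb_card_all leq_eqVlt; apply/orP; left; apply/eqP; apply: eq_card => x.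
by rewrite inE.
Qed.

Lemma side_count t (f : 'I_t * 'I_3 -> T) : packing e f ->
  #|(f @: setT) :\: X| <= 2 * t.
Proof.
move=> [finj fe].
apply: (@leq_trans #|f @: [set p | f p \notin X]|).
  apply: subset_leq_card; apply/subsetP => y; rewrite !inE => /andP [yX /imsetP [p _ Ey]].
  by rewrite Ey; apply: imset_f; rewrite inE -Ey.
apply: (leq_trans (leq_imset_card _ _)).
have E : \sum_p ((f p \notin X) : nat) = \sum_i \sum_j ((f (i, j) \notin X) : nat).
  by rewrite pair_bigA; apply: eq_bigr => [[i j]].
rewrite -sumb_card_all E.
apply: (@leq_trans (\sum_(i : 'I_t) 2)); last by rewrite sum_nat_const card_ord mulnC.
apply: leq_sum => i _; rewrite I3sum.
have [h1 h2] := fe i; have b1 := bip h1; have b2 := bip h2.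
move: b1 b2; case: (f (i, 0%R) \in X); case: (f (i, 1%R) \in X); by case: (f (i, 2%:R%R) \in X).
Qed.

End Comb.

End M_c3.
Import M_c3.

Module M_c4.

Section Rm.
Variable T : finType.

Definition rmv (e : rel T) (v : T) : rel T := [rel x y | e x y && (x != v) && (y != v)].

Lemma sum_eqv (F : T -> nat) v : \sum_x ((x == v) * F x) = F v.
Proof.
rewrite (bigD1 v) //= eqxx mul1n big1 ?addn0 // => x /negPf ->.
by rewrite mul0n.
Qed.

Lemma D_rmv (e : rel T) v : symmetric e -> Dsum e <= Dsum (rmv e v) + 2 * dg e v.
Proof.
move=> esym; rewrite /Dsum /dg.
apply: (@leq_trans (\sum_y \sum_x (rmv e v x y + (x == v) * e x y + (y == v) * e x y))).
  apply: leq_sum => y _; apply: leq_sum => x _ /=.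
  by rewrite /rmv /=; case: (x == v); case: (y == v); case: (e x y).
have E : \sum_y \sum_x (rmv e v x y + (x == v) * e x y + (y == v) * e x y) =
  \sum_y \sum_x (rmv e v x y : nat) + \sum_y \sum_x ((x == v) * e x y) + \sum_y \sum_x ((y == v) * e x y).
  by rewrite -!big_split /=; apply: eq_bigr => y _; rewrite -!big_split.
rewrite E.
have E2 : \sum_y \sum_x ((x == v) * e x y) = \sum_x (e x v : nat).
  rewrite (eq_bigr (fun y => (e v y : nat))); last by move=> y _; rewrite (sum_eqv (fun x => (e x y : nat))).
  by apply: eq_bigr => y _; rewrite esym.
have E3 : \sum_y \sum_x ((y == v) * e x y) = \sum_x (e x v : nat).
  rewrite (eq_bigr (fun y => (y == v) * \sum_x (e x y : nat))); last by move=> y _; rewrite big_distrr.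
  by rewrite (sum_eqv (fun y => \sum_x (e x y : nat))).
by rewrite E2 E3 mul2n -addnn addnA.
Qed.

End Rm.

End M_c4.
Import M_c4.

Module M_c5.

Section B.
Variable T : finType.

Definition CombP (k : nat) := forall (e : rel T) (W X : {set T}),
  symmetric e -> irreflexive e -> (forall x y, e x y -> x \in W) ->
  (forall x y, e x y -> (x \in X) != (y \in X)) ->
  ~ contains_kP3 e k -> 11 * k - 4 <= #|W| ->
  Dsum e <= 2 * ((k - 1) * (#|W| - k + 1)).

Lemma bipC (e : rel T) (X : {set T}) : (forall x y, e x y -> (x \in X) != (y \in X)) ->
  (forall x y, e x y -> (x \in ~: X) != (y \in ~: X)).
Proof. by move=> h x y /h; rewrite !in_setC; case: (x \in X); case: (y \in X). Qed.

Lemma caseA k (e : rel T) (W X : {set T}) : symmetric e -> (forall x y, e x y -> x \in W) ->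
  (forall x y, e x y -> (x \in X) != (y \in X)) ->
  #|W :&: X| < k -> 2 * k <= #|W| ->
  Dsum e <= 2 * ((k - 1) * (#|W| - k + 1)).
Proof.
move=> esym eW bip hs hn.
rewrite (Dsides esym bip).
have hc := cardsID X W.
have : \sum_(y in X) dg e y <= #|W :&: X| * #|W :\: X|.
  by apply: (sum_dg_le esym eW) => y yX _; apply: (dg_side eW bip).
move: hc hs hn; set s := #|W :&: X|; set r := #|W :\: X|; set n := #|W|.
move=> hc hs hn hh.
rewrite leq_mul2l /=; apply: (leq_trans hh).
have -> : r = n - s by lia.
nia.
Qed.

End B.

End M_c5.
Import M_c5.

Module M_c6.

Section B2.
Variable T : finType.

Lemma packing_W (e : rel T) (W : {set T}) t (f : 'I_t * 'I_3 -> T) :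
  symmetric e -> (forall x y, e x y -> x \in W) -> packing e f -> forall p, f p \in W.
Proof.
move=> esym eW [_ fe] [i j]; have [h1 h2] := fe i.
have := I3cases j => [[|[|]]] ->.
- exact: eW h1.
- exact: eW h2.
- by rewrite esym in h2; exact: eW h2.
Qed.

Lemma B2 k (e : rel T) (W : {set T}) t (f : 'I_t * 'I_3 -> T) :
  symmetric e -> irreflexive e -> (forall x y, e x y -> x \in W) ->
  (forall y, dg e y <= 2 * k - 1) -> packing e f -> ~ contains_kP3 e t.+1 ->
  Dsum e <= 2 * (3 * t * (2 * k - 1)) + (#|W| - 3 * t).
Proof.
move=> esym eirr eW hdg pf np.
have [finj fe] := pf.
set S := f @: setT.
have cS : #|S| = 3 * t by rewrite card_imset // cardsT card_prod !card_ord mulnC.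
have SW : S \subset W.
  by apply/subsetP => y /imsetP [p _ ->]; apply: (packing_W esym eW pf).
have cR : #|W :\: S| = #|W| - 3 * t.
  by rewrite cardsD (setIidPr SW) cS.
have fS : forall p, f p \notin W :\: S.
  by move=> p; rewrite !inE negb_and negbK imset_f.
rewrite /Dsum (bigID (fun y => y \in S)) /=.
have HS : \sum_(y in S) dg e y <= 3 * t * (2 * k - 1).
  rewrite -cS -sum_nat_const; exact: leq_sum.
have E1 : \sum_(y | y \notin S) dg e y =
   \sum_(y in ~: S) \sum_(x in S) (e x y : nat) + \sum_(y in ~: S) \sum_(x in ~: S) (e x y : nat).
  rewrite -big_split /=; apply: eq_big => y; first by rewrite in_setC.
  move=> _; rewrite /dg (bigID (fun x => x \in S)) /=; congr (_ + _).
  by apply: eq_bigl => x; rewrite in_setC.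
have HC : \sum_(y in ~: S) \sum_(x in S) (e x y : nat) <= 3 * t * (2 * k - 1).
  rewrite exchange_big /=; apply: (leq_trans _ HS); apply: leq_sum => x _.
  rewrite /dg; apply: (@leq_trans (\sum_(y in ~: S) (e y x : nat))).
    by rewrite leq_eqVlt; apply/orP; left; apply/eqP; apply: eq_bigr => y _; rewrite esym.
  by rewrite [X in _ <= X](bigID (fun y => y \in ~: S)) /= leq_addr.
have HR : \sum_(y in ~: S) \sum_(x in ~: S) (e x y : nat) <= #|W :\: S|.
  apply: (@leq_trans (\sum_(y in ~: S) ((y \in W :\: S) : nat))); last first.
    rewrite sumb_card; apply: subset_leq_card; apply/subsetP => y; rewrite !inE.
    by case/andP => _ ->.
  apply: leq_sum => y yS; case: (boolP (y \in W)) => yW.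
    have yR : y \in W :\: S by rewrite inE yW andbT -in_setC.
    rewrite yR; apply: (leq_trans _ (deg_le1 esym eirr pf np fS yR)).
    rewrite !sumb_card leq_eqVlt; apply/orP; left; apply/eqP; apply: eq_card => x.
    rewrite !inE; case: (boolP (e x y)) => exy; rewrite ?andbF ?andbT //.
    by rewrite (eW _ _ exy) andbT.
  rewrite big1 // => x _; case: (boolP (e x y)) => // exy.
  by move: yW; rewrite (eW2 esym eW exy).
rewrite E1 cR in HR *; lia.
Qed.

End B2.

End M_c6.
Import M_c6.

Module M_c7.

Section B1.
Variable T : finType.

Lemma B1 k (e : rel T) (W X : {set T}) v :
  (2 <= k) -> (3 <= k -> CombP T (k - 1)) ->
  symmetric e -> irreflexive e -> (forall x y, e x y -> x \in W) ->
  (forall x y, e x y -> (x \in X) != (y \in X)) ->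
  ~ contains_kP3 e k -> 11 * k - 4 <= #|W| ->
  v \in X -> 2 * k <= dg e v -> k <= #|W :&: X| ->
  Dsum e <= 2 * ((k - 1) * (#|W| - k + 1)).
Proof.
move=> k2 IH esym eirr eW bip nk hn vX hv hX.
set e' := rmv e v.
have esym' : symmetric e'.
  by move=> x y; rewrite /e' /rmv /= esym; case: (x != v); case: (y != v); rewrite ?andbT ?andbF.
have eirr' : irreflexive e'.
  by move=> x; rewrite /e' /rmv /= eirr.
have eW' : forall x y, e' x y -> x \in W :\ v.
  move=> x y; rewrite /e' /rmv /= => /andP [/andP [exy xv] _].
  by rewrite !inE xv (eW _ _ exy).
have bip' : forall x y, e' x y -> (x \in X) != (y \in X).
  by move=> x y; rewrite /e' /rmv /= => /andP [/andP [exy _] _]; apply: bip.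
have kE : k = (k - 1).+1 by lia.
have np' : ~ contains_kP3 e' (k - 1).
  move=> [f [finj fe]].
  have pf : packing e f.
    split => // i; have [h1 h2] := fe i; move: h1 h2; rewrite /e' /rmv /=.
    by move=> /andP [/andP [-> _] _] /andP [/andP [-> _] _].
  have fnv : forall p, f p != v.
    move=> [i j]; have [h1 h2] := fe i; move: h1 h2; rewrite /e' /rmv /=.
    move=> /andP [/andP [_ a1] a2] /andP [/andP [_ a3] a4].
    by have := I3cases j => [[|[|]]] ->.
  set S := f @: setT.
  set N := [set y | e y v].
  have cN : #|N| = dg e v by rewrite /dg sumb_card_all.
  have NS : #|N :&: S| <= 2 * (k - 1).
    apply: (leq_trans _ (side_count bip pf)); apply: subset_leq_card.
    apply/subsetP => y; rewrite !inE => /andP [eyv ->]; rewrite andbT.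
    by have := bip _ _ eyv; rewrite vX; case: (y \in X).
  have hid := cardsID S N.
  have : 1 < #|N :\: S| by lia.
  move=> /card_gt1P [y [z [yN zN yz]]].
  move: yN zN; rewrite !inE => /andP [yS eyv] /andP [zS ezv].
  apply: nk; rewrite kE; apply: (@ext_contains _ _ _ f y v z) => //.
  - by apply: contraTneq eyv => ->; rewrite eirr.
  - by apply: contraTneq ezv => ->; rewrite eirr.
  - move=> p; split; last 1 first.
    + by apply: contraNneq zS => <-; rewrite imset_f.
    + by apply: contraNneq yS => <-; rewrite imset_f.
    + exact: fnv.
  - by rewrite esym.
have HD := D_rmv v esym.
have Wv : v \in W.
  move: hv; rewrite /dg; case: (boolP [exists x, e x v]).
    by move=> /existsP [x exv] _; rewrite (eW2 esym eW exv).
  move=> /existsPn hx; rewrite big1 //; first by lia.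
  by move=> x _; rewrite (negPf (hx x)).
have cW' : #|W :\ v| = #|W| - 1 by rewrite (cardsD1 v W) Wv; lia.
have dgv : dg e v <= #|W :\: X| by apply: (dg_side eW bip).
have ncard := cardsID X W.
case: (ltnP 2 k) => k3.
  have := IH k3 e' (W :\ v) X esym' eirr' eW' bip' np'.
  rewrite cW' => h; have := h ltac:(lia).
  move: HD dgv ncard hn hX k2 k3; set n := #|W|; set a := #|W :&: X|; set b := #|W :\: X|.
  set D := Dsum e; set D' := Dsum e'; set d := dg e v.
  move=> *; nia.
have k2E : k = 2 by lia.
have h1 : forall y, y \in X -> y \in W :\ v -> dg e' y <= 1.
  move=> y _ _; have np1 : ~ contains_kP3 e' 1 by rewrite -(_ : k - 1 = 1) //; lia.
  have := deg_le1 esym' eirr' (pack0 e') np1 (A := setT) (fun p => match p.1 with @Ordinal _ m H => False_ind _ (Bool.diff_false_true H) end) (in_setT y).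
  by rewrite /dg; under eq_bigl do rewrite in_setT.
have hD' : Dsum e' <= 2 * (#|(W :\ v) :&: X| * 1).
  by rewrite (Dsides esym' bip') leq_mul2l /=; apply: (sum_dg_le esym' eW' h1).
have cWX : #|(W :\ v) :&: X| = #|W :&: X| - 1.
  have -> : (W :\ v) :&: X = (W :&: X) :\ v by apply/setP => x; rewrite !inE; case: (x == v); case: (x \in W); case: (x \in X).
  by rewrite (cardsD1 v (W :&: X)) !inE Wv vX /=; lia.
rewrite cWX in hD'.
move: HD dgv ncard hn hX hD'; rewrite k2E.
set n := #|W|; set a := #|W :&: X|; set b := #|W :\: X|.
set D := Dsum e; set D' := Dsum e'; set d := dg e v.
move=> *; nia.
Qed.

End B1.

End M_c7.
Import M_c7.

Module M_c8.

Lemma arithB2 K n t : 2 <= K -> t < K -> 11 * K - 4 <= n ->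
  2 * (3 * t * (2 * K - 1)) + (n - 3 * t) <= 2 * ((K - 1) * (n - K + 1)).
Proof.
move=> K2 tK hn.
have h1 : 2 * (3 * t * (2 * K - 1)) <= 2 * (3 * (K - 1) * (2 * K - 1)).
  by rewrite leq_mul2l /= leq_mul2r leq_mul2l /=; lia.
nia.
Qed.

Lemma comb (T : finType) k : 2 <= k -> CombP T k.
Proof.
elim: k => [|k IH] // k2.
move=> e W X esym eirr eW bip nk hn.
have IH' : 3 <= k.+1 -> CombP T (k.+1 - 1).
  by move=> h; rewrite subSS subn0; apply: IH; lia.
have hn2 : 2 * k.+1 <= #|W| by lia.
case: (ltnP #|W :&: X| k.+1) => hX.
  exact: (caseA esym eW bip).
have hWC : W :&: ~: X = W :\: X by rewrite setDE.
case: (ltnP #|W :\: X| k.+1) => hY.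
  have hY' : #|W :&: ~: X| < k.+1 by rewrite hWC.
  exact: (caseA esym eW (bipC bip) hY' hn2).
case: (classic (exists v, 2 * k.+1 <= dg e v)) => [[v hv]|nv].
  case: (boolP (v \in X)) => vX.
    exact: (B1 k2 IH' esym eirr eW bip nk hn vX hv hX).
  have vCX : v \in ~: X by rewrite in_setC.
  have hX' : k.+1 <= #|W :&: ~: X| by rewrite hWC.
  exact: (B1 k2 IH' esym eirr eW (bipC bip) nk hn vCX hv hX').
have hdg : forall y, dg e y <= 2 * k.+1 - 1.
  move=> y; case: (leqP (dg e y) (2 * k.+1 - 1)) => // h; exfalso; apply: nv; exists y; lia.
have c0 : contains_kP3 e 0 by exists (f0 T); exact: pack0.
have [t [tk [[f pf] np]]] := @maxpack (fun t : nat => contains_kP3 e t) k.+1 c0 nk.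
have := B2 esym eirr eW hdg pf np => h.
apply: (leq_trans h); apply: arithB2 => //.
Qed.

End M_c8.
Import M_c8.

Module M_f1.
Local Open Scope ring_scope.

Section EigLink.
Variable R : rcfType.
Variable T : finType.
Variable e : rel T.

Lemma eig_of_root lam : lam \in rootsR (char_poly (adj_mx R e)) ->
  exists w : T -> R, (exists x, w x != 0) /\ forall y, \sum_x w x * (e x y)%:R = lam * w y.
Proof.
rewrite in_rootsR ?monic_neq0 ?char_poly_monic // -eigenvalue_root_char.
move=> /eigenvalueP [v Hv v0].
exists (fun x => v 0 (enum_rank x)); split.
  have [i Hi] : exists i, v 0 i != 0.
    apply/existsP; move: v0; apply: contraR => /existsPn H.
    by apply/eqP/rowP => i; rewrite mxE; have := H i; rewrite negbK => /eqP.
  by exists (enum_val i); rewrite enum_valK.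
move=> y; have := congr1 (fun M : 'rV[R]_#|T| => M 0 (enum_rank y)) Hv.
by rewrite mx_entry enum_rankK mxE.
Qed.

Lemma root_of_eig lam (w : T -> R) : (exists x, w x != 0) ->
  (forall y, \sum_x w x * (e x y)%:R = lam * w y) ->
  lam \in rootsR (char_poly (adj_mx R e)).
Proof.
move=> [x0 wx0] eig.
rewrite in_rootsR ?monic_neq0 ?char_poly_monic // -eigenvalue_root_char.
apply/eigenvalueP; exists (\row_j w (enum_val j)).
  apply/rowP => j; rewrite mx_entry !mxE -eig.
  by apply: eq_bigr => x _; rewrite mxE enum_rankK.
apply/eqP => /rowP /(_ (enum_rank x0)); rewrite !mxE enum_rankK => /eqP.
by rewrite (negPf wx0).
Qed.

End EigLink.

End M_f1.
Import M_f1.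

Module M_f2.

Lemma kP3_complete (T : finType) (e : rel T) k (P Q : {set T}) :
  P :&: Q = set0 -> k <= #|P| -> 2 * k <= #|Q| ->
  (forall x y, x \in P -> y \in Q -> e x y && e y x) -> contains_kP3 e k.
Proof.
move=> PQ kP kQ hc.
case: k kP kQ => [|k] kP kQ; first by exists (f0 T); exact: pack0.
have [x0 x0P] : exists x, x \in P.
  by apply/set0Pn; rewrite -card_gt0; lia.
set sP := enum P; set sQ := enum Q.
have szP : size sP = #|P| by rewrite cardE.
have szQ : size sQ = #|Q| by rewrite cardE.
have uP : uniq sP := enum_uniq _.
have uQ : uniq sQ := enum_uniq _.
have inP : forall i, i < #|P| -> nth x0 sP i \in P.
  by move=> i hi; rewrite -mem_enum mem_nth // szP.
have inQ : forall i, i < #|Q| -> nth x0 sQ i \in Q.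
  by move=> i hi; rewrite -mem_enum mem_nth // szQ.
have disj : forall x, x \in P -> x \in Q -> False.
  move=> x xP xQ; have : x \in P :&: Q by rewrite inE xP xQ.
  by rewrite PQ inE.
set g := fun p : 'I_k.+1 * 'I_3 =>
  if p.2 == 1%R then nth x0 sP p.1 else nth x0 sQ (2 * p.1 + (p.2 == 2%:R%R)).
have ginj : injective g.
  move=> [i j] [i' j']; rewrite /g /=.
  have hi := ltn_ord i; have hi' := ltn_ord i'.
  have := I3cases j => [[|[|]]] ->; have := I3cases j' => [[|[|]]] -> /= E.
  all: try first
   [ (move/eqP: E; rewrite nth_uniq ?szQ; [|lia|lia|done]; move/eqP => E;
      (have ii : i = i' by apply: val_inj => /=; lia);
      rewrite ii; (done || (exfalso; lia)))
   | (move/eqP: E; rewrite nth_uniq ?szP; [|lia|lia|done]; move/eqP => E;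
      (have ii : i = i' by apply: val_inj => /=; lia);
      rewrite ii; done)
   | (exfalso; apply: (disj (nth x0 sP i)); [apply: inP; lia | rewrite E; apply: inQ; lia])
   | (exfalso; apply: (disj (nth x0 sP i')); [apply: inP; lia | rewrite -E; apply: inQ; lia]) ].
exists g; split => //.
move=> i; rewrite /g /=; have hi := ltn_ord i.
have i1 : i < #|P| by lia.
have i2 : 2 * i + 0 < #|Q| by lia.
have i3 : 2 * i + 1 < #|Q| by lia.
split.
  by case/andP: (hc _ _ (inP i i1) (inQ _ i2)).
by case/andP: (hc _ _ (inP i i1) (inQ _ i3)).
Qed.

End M_f2.
Import M_f2.

Module M_f4.
Local Open Scope ring_scope.

Lemma complete_eig (R : rcfType) (T : finType) (e : rel T) (A : {set T}) (a b : nat) :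
  #|A| = a -> #|~: A| = b -> (0 < a)%N -> (0 < b)%N ->
  (forall x y, e x y = ((x \in A) != (y \in A))) ->
  exists w : T -> R, (exists x, w x != 0) /\
    forall y, \sum_x w x * (e x y)%:R = Num.sqrt ((a * b)%N%:R) * w y.
Proof.
move=> cA cB a0 b0 he.
set lam := Num.sqrt ((a * b)%N%:R : R).
have l2 : lam ^+ 2 = a%:R * b%:R by rewrite sqr_sqrtr ?ler0n // natrM.
have bn0 : (b%:R : R) != 0 by rewrite pnatr_eq0 -lt0n.
exists (fun x => if x \in A then 1 else lam / b%:R); split.
  have [x xA] : exists x, x \in A by apply/set0Pn; rewrite -card_gt0 cA.
  by exists x; rewrite xA oner_eq0.
move=> y; rewrite (bigID (fun x => x \in A)) /=.
case: (boolP (y \in A)) => yA.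
  rewrite big1 ?add0r; last by move=> x xA; rewrite he xA yA /= mulr0.
  rewrite (eq_bigr (fun _ => lam / b%:R)); last first.
    by move=> x /negPf xA; rewrite he xA yA /= mulr1.
  rewrite (eq_bigl (fun x => x \in ~: A)); last by move=> x; rewrite in_setC.
  by rewrite sumr_const cB -[s in s = _]mulr_natr divfK // mulr1.
rewrite [s in _ + s]big1 ?addr0; last by move=> x /negPf xA; rewrite he xA (negPf yA) /= mulr0.
rewrite (eq_bigr (fun _ => 1)); last by move=> x xA; rewrite he xA (negPf yA) /= mulr1.
by rewrite sumr_const cA mulrA -expr2 l2 mulrK // unitfE.
Qed.


End M_f4.
Import M_f4.

Local Open Scope ring_scope.

Theorem mainTheorem3 (R : rcfType) (T : finType) (e : rel T) (k : nat) :
  simple_graph e ->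
  (2 <= k)%N ->
  (11 * k - 4 <= #|T|)%N ->
  bipartite e ->
  ~ contains_kP3 e k ->
  spec_rad R e <= Num.sqrt (((k - 1) * (#|T| - k + 1))%N%:R) /\
  (spec_rad R e = Num.sqrt (((k - 1) * (#|T| - k + 1))%N%:R) <->
   is_complete_bipartite e (k - 1) (#|T| - k + 1)).
Proof.
move=> [esy eirr] k2 hn [X bip] nk.
set f := ((k - 1) * (#|T| - k + 1))%N.
have hcomb := @comb T k k2 e setT X esy eirr (fun x y _ => in_setT x) bip nk.
rewrite cardsT in hcomb; have {}hcomb := hcomb hn.
set m := (\sum_(y in ~: X) dg e y)%N.
have Dm : Dsum e = (2 * m)%N by rewrite (Dsides esy bip) (dg_sidesC esy bip).
have mf : (m <= f)%N by rewrite /f; lia.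
have fpos : (0 < f)%N by rewrite /f muln_gt0; apply/andP; split; lia.
set s := rootsR (char_poly (adj_mx R e)).
have srE : spec_rad R e = \big[Num.max/0]_(x <- s) x by [].
have ub : spec_rad R e <= Num.sqrt f%:R.
  rewrite srE; case: (bigmax_cases s) => [->|Hin]; first exact: sqrtr_ge0.
  have [w [wnz eig]] := eig_of_root Hin.
  have hl := spec_le eig esy bip wnz.
  set lam := \big[Num.max/0]_(x <- s) x in hl *.
  apply: (le_trans (ler_norm lam)); rewrite -sqrtr_sqr; apply: ler_wsqrtr.
  by apply: (le_trans hl); rewrite ler_nat.
split => //; split.
- rewrite srE => Heq.
  case: (bigmax_cases s) => Hin.
    exfalso; move: Heq; rewrite Hin => /esym /eqP; rewrite sqrtr_eq0 leNgt ltr0n fpos //.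
  rewrite Heq in Hin.
  have [w [wnz eig]] := eig_of_root Hin.
  set lam := Num.sqrt (f%:R : R) in Hin eig.
  have l2 : lam ^+ 2 = f%:R by rewrite sqr_sqrtr ?ler0n.
  have hl := spec_le eig esy bip wnz.
  have mfE : m = f.
    apply/eqP; rewrite eqn_leq mf /= -(ler_nat R) -l2; exact: hl.
  have l0 : lam != 0 by rewrite sqrtr_eq0 -ltNge ltr0n.
  have hst := spec_eq eig esy bip wnz l0 (etrans l2 (congr1 _ (esym mfE))).
  set P := PP w X in hst; set Q := QQ w X in hst.
  have PX : forall x, x \in P -> x \in X by move=> x; rewrite !inE => /andP [].
  have QX : forall x, x \in Q -> x \notin X by move=> x; rewrite !inE => /andP [].
  have PQ0 : P :&: Q = set0.
    apply/setP => x; rewrite in_setI in_set0; apply/negbTE; apply/negP => /andP [xP xQ].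
    by move: (PX x xP) (QX x xQ) => ->.
  have cm : m = (#|P| * #|Q|)%N.
    rewrite /m (eq_bigr (fun y => ((y \in Q) * #|P|)%N)); last first.
      move=> y yX; rewrite /dg (eq_bigr (fun x => ((x \in P) && (y \in Q) : nat))); last first.
        move=> x _; rewrite hst.
        have -> : (y \in P) = false.
          by apply/negbTE; apply/negP => /PX yX'; move: yX; rewrite in_setC yX'.
        by rewrite andbF orbF.
      case: (y \in Q); last by rewrite mul0n big1 // => x _; rewrite andbF.
      by rewrite mul1n sumb_card_all; apply: eq_card => x; rewrite !inE andbT.
    rewrite -big_distrl /= sumb_card mulnC; congr (_ * _)%N; apply: eq_card => x.
    by rewrite !inE; case: (x \in X); case: (w x != 0).
  have cPQ : #|P :|: Q| = (#|P| + #|Q|)%N by rewrite cardsU PQ0 cards0 subn0.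
  have hPQ : (#|P| + #|Q| <= #|T|)%N by rewrite -cPQ max_card.
  have nc1 : ~ ((k <= #|P|)%N /\ (2 * k <= #|Q|)%N).
    move=> [h1 h2]; apply: nk; apply: (kP3_complete PQ0 h1 h2) => x y xP yQ.
    by rewrite !hst xP yQ /= orbT.
  have nc2 : ~ ((k <= #|Q|)%N /\ (2 * k <= #|P|)%N).
    move=> [h1 h2]; apply: nk; rewrite setIC in PQ0.
    apply: (kP3_complete PQ0 h1 h2) => x y xQ yP.
    by rewrite !hst xQ yP /= orbT.
  have hpq : (#|P| * #|Q| = (k - 1) * (#|T| - k + 1))%N by rewrite -cm mfE.
  have full : forall x, (x \in Q) = (x \notin P).
    have hU : P :|: Q = setT.
      apply/eqP; rewrite eqEcard subsetT cardsT cPQ /=.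
      case: (arith_final _ _ _ _ k2 hn hpq hPQ nc1 nc2) => [[-> ->]|[-> ->]]; move: hn; set N := #|T|; move=> hn; lia.
    move=> x; have : x \in P :|: Q by rewrite hU in_setT.
    rewrite inE; case: (boolP (x \in P)) => xP /=; last by [].
    move=> _; apply: negbTE; apply/negP => xQ.
    have : x \in P :&: Q by rewrite in_setI xP xQ.
    by rewrite PQ0 in_set0.
  have hE : forall x y, e x y = ((x \in P) != (y \in P)).
    by move=> x y; rewrite hst !full; case: (x \in P); case: (y \in P).
  have hC : forall A : {set T}, #|~: A| = (#|T| - #|A|)%N.
    by move=> A; rewrite cardsCs setCK.
  have [[p1 q1]|[q1 p1]] := arith_final _ _ _ _ k2 hn hpq hPQ nc1 nc2.
    exists P; split => //; split => //; rewrite hC p1; lia.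
  exists Q; split => //; split; first by rewrite hC q1; lia.
  by move=> x y; rewrite hE !full; case: (x \in P); case: (y \in P).
- move=> [A [cA [cB hA]]].
  have [w [wnz eig]] := @complete_eig R _ _ _ _ _ cA cB ltac:(lia) ltac:(lia) hA.
  have Hin := root_of_eig wnz eig.
  apply/eqP; rewrite eq_le ub /= srE; exact: bigmax_ge.
Qed.
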